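(* Let $\mathbb{D}$ be a division ring, let $2\le m,n<\infty$, let $P$ be an $n\times m$ matrix over $\mathbb{D}$ with $\operatorname{rank}P=r\ge 2$, and let $\mathcal{A}=\mathfrak{M}(\mathbb{D}, m, n, P)$. Then $\xi(\mathcal{A})$ is defined and $$\lceil \min\{m,n\}/r\rceil \le \xi(\mathcal{A}) \le \lceil \min\{m,n\}/r\rceil + 3,$$ where $\lceil x\rceil$ denotes the smallest integer $\ge x$.
   Context: $\mathfrak{M}(\mathbb{D}, m, n, P)$ denotes the ring of all $m\times n$ matrices over the division ring $\mathbb{D}$ with entrywise addition and multiplication $A\bullet B = APB$. The commutator is $[x,y]=x\bullet y-y\bullet x$; $[X,Y]=\{[x,y]:x\in X,y\in Y\}$, $XY=\{x\bullet y:x\in X,y\in Y\}$, and $\sum^N S$ denotes the set of sums of $N$ elements of $S$. For a ring $\mathbb{R}$ for which some $N\in\mathbb{N}$ satisfies $\mathbb{R}=\sum^N[\mathbb{R},\mathbb{R}][\mathbb{R},\mathbb{R}]$, $\xi(\mathbb{R})$ is the least such $N$. *)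

(* Defs.v *)
From HB Require Import structures.
From mathcomp Require Import all_boot all_order all_algebra.
Set Implicit Arguments. Unset Strict Implicit. Unset Printing Implicit Defensive.
Import GRing.Theory.
Local Open Scope ring_scope.

Definition is_division_ring (D : unitRingType) : Prop :=
  forall x : D, x != 0 -> x \is a GRing.unit.

Definition rows_left_indep (D : unitRingType) (n m k : nat)
  (P : 'M[D]_(n, m)) (f : 'I_k -> 'I_n) : Prop :=
  forall c : 'rV[D]_k, c *m rowsub f P = 0 -> c = 0.

(* rank P = r : the dimension of the (left) row space of P, i.e. the maximal
   number of left-linearly independent rows of P. *)
Definition drank_is (D : unitRingType) (n m : nat) (P : 'M[D]_(n, m)) (r : nat) : Prop :=
  (exists f : 'I_r -> 'I_n, rows_left_indep P f) /\
  (forall (k : nat) (f : 'I_k -> 'I_n), rows_left_indep P f -> (k <= r)%N).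

(* The ring M(D, m, n, P): m x n matrices with product A . B = A P B. *)
Definition pmul (D : unitRingType) (m n : nat) (P : 'M[D]_(n, m))
  (A B : 'M[D]_(m, n)) : 'M[D]_(m, n) := A *m P *m B.

Definition pcomm (D : unitRingType) (m n : nat) (P : 'M[D]_(n, m))
  (x y : 'M[D]_(m, n)) : 'M[D]_(m, n) := pmul P x y - pmul P y x.

Definition in_CC (D : unitRingType) (m n : nat) (P : 'M[D]_(n, m))
  (z : 'M[D]_(m, n)) : Prop :=
  exists x y u v : 'M[D]_(m, n), z = pmul P (pcomm P x y) (pcomm P u v).

Definition sumCC_covers (D : unitRingType) (m n : nat) (P : 'M[D]_(n, m)) (N : nat) : Prop :=
  forall z : 'M[D]_(m, n), exists g : 'I_N -> 'M[D]_(m, n),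
    (forall i, in_CC P (g i)) /\ z = \sum_(i < N) g i.

Definition ceil_div (a b : nat) : nat := ((a + b).-1 %/ b)%N.

(* Main.v *)
Require Import Defs.
From mathcomp Require Import all_boot all_order all_algebra all_fingroup zify.
From Stdlib Require Import Classical.
Set Implicit Arguments. Unset Strict Implicit. Unset Printing Implicit Defensive.
Import GRing.Theory.
Local Open Scope ring_scope.
Lemma tperm_mxK (R : pzRingType) n (i j : 'I_n) :
  tperm_mx i j *m tperm_mx i j = 1%:M :> 'M[R]_n.
Proof. by rewrite /tperm_mx -perm_mxM tperm2 perm_mx1. Qed.

Lemma pid_mxS (R : pzRingType) a b u :
  pid_mx (1 + u) = block_mx 1%:M 0 0 (pid_mx u) :> 'M[R]_(1 + a, 1 + b).
Proof.
apply/matrixP => x y.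
rewrite -[x](splitK) -[y](splitK).
case: (split x) => [x1|x2]; case: (split y) => [y1|y2];
  rewrite ?block_mxEul ?block_mxEur ?block_mxEdl ?block_mxEdr !mxE /=.
all: by rewrite ?ord1 //= ?add1n ?eqSS ?ltnS.
Qed.

Lemma GE (D : unitRingType) : is_division_ring D ->
  forall a b (A : 'M[D]_(a,b)), exists u (X Xi : 'M[D]_a) (Y Yi : 'M[D]_b),
  [/\ (u <= minn a b)%N, X *m Xi = 1%:M, Xi *m X = 1%:M, Y *m Yi = 1%:M
     & Yi *m Y = 1%:M] /\ A = X *m pid_mx u *m Y.
Proof.
move=> hD; elim=> [|a IH] b A.
  exists 0%N, 1%:M, 1%:M, 1%:M, 1%:M; split; first by split; rewrite ?mulmx1.
  by apply/matrixP => -[].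
case: (boolP (A == 0)) => [/eqP-> | nzA].
  exists 0%N, 1%:M, 1%:M, 1%:M, 1%:M; split; first by split; rewrite ?mulmx1.
  by rewrite pid_mx_0 mulmx0 mul0mx.
have [i [j Aij]] : exists i j, A i j != 0.
  apply: NNPP => H; move/eqP: nzA; apply; apply/matrixP=> i j; rewrite mxE.
  by case: (eqVneq (A i j) 0) => // hne; exfalso; apply: H; exists i, j.
destruct b as [|b]; first by case: j Aij.
pose A1 : 'M[D]_(1 + a, 1 + b) := xrow i 0 (xcol j 0 A).
pose al := A i j.
have alU : al \is a GRing.unit by apply: hD.
pose ali := al^-1.
pose u := ursubmx A1; pose v := dlsubmx A1; pose A' := drsubmx A1.
have eA1 : A1 = block_mx al%:M u v A'.
  rewrite -[LHS]submxK; congr block_mx.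
  rewrite [LHS]mx11_scalar; congr (_%:M).
  have l0 : forall k, lshift k (0 : 'I_1) = 0 :> 'I_(1 + k) by move=> k; apply: val_inj.
  by rewrite !mxE /= !l0 !tpermR.
pose A'' := A' - v *m (ali%:M *m u).
have [u0 [X0 [X0i [Y0 [Y0i [[hu0 hX1 hX2 hY1 hY2] eA'']]]]]] := IH b A''.
pose Lw : 'M[D]_(1 + a) := block_mx 1%:M 0 (v *m ali%:M) 1%:M.
pose Lwi : 'M[D]_(1 + a) := block_mx 1%:M 0 (- (v *m ali%:M)) 1%:M.
pose Ba : 'M[D]_(1 + a) := block_mx al%:M 0 0 X0.
pose Bai : 'M[D]_(1 + a) := block_mx ali%:M 0 0 X0i.
pose Up : 'M[D]_(1 + b) := block_mx 1%:M (ali%:M *m u) 0 1%:M.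
pose Upi : 'M[D]_(1 + b) := block_mx 1%:M (- (ali%:M *m u)) 0 1%:M.
pose BY : 'M[D]_(1 + b) := block_mx 1%:M 0 0 Y0.
pose BYi : 'M[D]_(1 + b) := block_mx 1%:M 0 0 Y0i.
have aai : al%:M *m ali%:M = 1%:M :> 'M[D]_1 by rewrite -scalar_mxM mulrV.
have aia : ali%:M *m al%:M = 1%:M :> 'M[D]_1 by rewrite -scalar_mxM mulVr.
exists u0.+1, (tperm_mx i 0 *m (Lw *m Ba)), ((Bai *m Lwi) *m tperm_mx i 0),
  ((BY *m Up) *m tperm_mx j 0), (tperm_mx j 0 *m (Upi *m BYi)).
have hBa : Ba *m Bai = 1%:M.
  by rewrite /Ba /Bai mulmx_block !mulmx0 !mul0mx !addr0 !add0r aai hX1 [RHS](scalar_mx_block 1).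
have hBa' : Bai *m Ba = 1%:M.
  by rewrite /Ba /Bai mulmx_block !mulmx0 !mul0mx !addr0 !add0r aia hX2 [RHS](scalar_mx_block 1).
have hL : Lw *m Lwi = 1%:M.
  by rewrite /Lw /Lwi mulmx_block !mulmx0 !mul0mx !mulmx1 !mul1mx !addr0 ?add0r addrN [RHS](scalar_mx_block 1).
have hL' : Lwi *m Lw = 1%:M.
  by rewrite /Lw /Lwi mulmx_block !mulmx0 !mul0mx !mulmx1 !mul1mx !addr0 ?add0r addNr [RHS](scalar_mx_block 1).
have hU : Up *m Upi = 1%:M.
  by rewrite /Up /Upi mulmx_block !mulmx0 !mul0mx !mulmx1 !mul1mx !addr0 !add0r addNr [RHS](scalar_mx_block 1).
have hU' : Upi *m Up = 1%:M.
  by rewrite /Up /Upi mulmx_block !mulmx0 !mul0mx !mulmx1 !mul1mx !addr0 !add0r addrN [RHS](scalar_mx_block 1).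
have hB : BY *m BYi = 1%:M.
  by rewrite /BY /BYi mulmx_block !mulmx0 !mul0mx !addr0 !add0r !mulmx1 hY1 [RHS](scalar_mx_block 1).
have hB' : BYi *m BY = 1%:M.
  by rewrite /BY /BYi mulmx_block !mulmx0 !mul0mx !addr0 !add0r !mulmx1 hY2 [RHS](scalar_mx_block 1).
split; first split.
- by rewrite minnSS ltnS.
- by rewrite -!mulmxA (mulmxA Ba) hBa mul1mx (mulmxA Lw) hL mul1mx tperm_mxK.
- by rewrite -!mulmxA (mulmxA (tperm_mx i 0)) tperm_mxK mul1mx (mulmxA Lwi) hL' mul1mx hBa'.
- by rewrite -!mulmxA (mulmxA (tperm_mx j 0)) tperm_mxK mul1mx (mulmxA Up) hU mul1mx hB.
- by rewrite -!mulmxA (mulmxA BYi) hB' mul1mx (mulmxA Upi) hU' mul1mx tperm_mxK.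
have -> : A = tperm_mx i 0 *m A1 *m tperm_mx j 0.
  by rewrite /A1 xrowE xcolE !mulmxA tperm_mxK mul1mx -mulmxA tperm_mxK mulmx1.
have key : Lw *m Ba *m (pid_mx u0.+1 : 'M_(1 + a, 1 + b)) *m BY *m Up = A1.
  rewrite eA1 pid_mxS /Ba /BY /Lw /Up.
  rewrite !(mulmx_block, mulmx0, mul0mx, mulmx1, mul1mx, addr0, add0r).
  rewrite -eA'' -mulmxA aia mulmx1 mulmxA aai mul1mx /A''.
  by rewrite addrC subrK.
by rewrite -key !mulmxA.
Qed.

Lemma DEP (D : unitRingType) : is_division_ring D ->
  forall a b (A : 'M[D]_(a,b)), (b < a)%N -> exists c : 'rV[D]_a, c != 0 /\ c *m A = 0.
Proof.
move=> hD a b A ltba.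
have [u [X [Xi [Y [Yi [[hu h1 h2 h3 h4] eA]]]]]] := GE hD A.
have ka : (a.-1 < a)%N by rewrite prednK // (leq_ltn_trans _ ltba).
pose k := Ordinal ka.
exists (delta_mx 0 k *m Xi); split.
  apply/eqP => c0.
  have : (delta_mx 0 k : 'rV[D]_a) *m Xi *m X = 0 by rewrite c0 mul0mx.
  rewrite -mulmxA h2 mulmx1 => /matrixP /(_ 0 k); rewrite !mxE !eqxx /=.
  by move/eqP; rewrite oner_eq0.
rewrite eA !mulmxA -(mulmxA _ Xi) h2 mulmx1 -rowE.
have -> : row k (pid_mx u : 'M[D]_(a,b)) = 0.
  apply/matrixP => x y; rewrite !mxE.
  have : (u <= k)%N.
    rewrite /= -ltnS prednK ?(leq_ltn_trans _ ltba) //.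
    exact: leq_trans hu (geq_minr _ _).
  by case: (ltnP k u) => //= _ _; rewrite andbF.
by rewrite mul0mx.
Qed.

Lemma IBN (D : unitRingType) : is_division_ring D ->
  forall k s (C : 'M[D]_(k,s)) (R : 'M[D]_(s,k)), C *m R = 1%:M -> (k <= s)%N.
Proof.
move=> hD k s C R hCR; rewrite leqNgt; apply/negP => lt.
have [c [nz0 hc]] := DEP hD C lt.
have : c *m C *m R = c by rewrite -mulmxA hCR mulmx1.
by rewrite hc mul0mx => c0; rewrite -c0 eqxx in nz0.
Qed.

Definition cov (D : unitRingType) m n (P : 'M[D]_(n,m)) N (z : 'M[D]_(m,n)) :=
  exists g : 'I_N -> 'M[D]_(m,n), (forall i, in_CC P (g i)) /\ z = \sum_(i < N) g i.

Lemma inCC0 (D : unitRingType) m n (P : 'M[D]_(n,m)) : in_CC P 0.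
Proof. by exists 0, 0, 0, 0; rewrite /pcomm /pmul !mul0mx subrr !mul0mx. Qed.

Lemma cov0 (D : unitRingType) m n (P : 'M[D]_(n,m)) N : cov P N 0.
Proof.
exists (fun _ => 0); split; first by move=> _; apply: inCC0.
by rewrite big1.
Qed.

Lemma cov1 (D : unitRingType) m n (P : 'M[D]_(n,m)) z : in_CC P z -> cov P 1 z.
Proof. by move=> hz; exists (fun _ => z); split => //; rewrite big_ord1. Qed.

Lemma covD (D : unitRingType) m n (P : 'M[D]_(n,m)) N1 N2 z1 z2 :
  cov P N1 z1 -> cov P N2 z2 -> cov P (N1 + N2) (z1 + z2).
Proof.
move=> [g1 [h1 e1]] [g2 [h2 e2]].
exists (fun i => match split i with inl a => g1 a | inr b => g2 b end); split.
  by move=> i; case: (split i).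
rewrite big_split_ord /= e1 e2; congr (_ + _); apply: eq_bigr => i _.
  by rewrite (unsplitK (inl i : 'I_N1 + 'I_N2)).
by rewrite (unsplitK (inr i : 'I_N1 + 'I_N2)).
Qed.

Lemma cov_mono (D : unitRingType) m n (P : 'M[D]_(n,m)) N N' z :
  (N <= N')%N -> cov P N z -> cov P N' z.
Proof.
move=> le hz; rewrite -(subnKC le) -[z]addr0; apply: covD hz _; exact: cov0.
Qed.

Lemma cov_sum (D : unitRingType) m n (P : 'M[D]_(n,m)) N (g : 'I_N -> 'M[D]_(m,n)) :
  (forall i, in_CC P (g i)) -> cov P N (\sum_(i < N) g i).
Proof. by move=> h; exists g. Qed.

Lemma cov_transfer (D : unitRingType) m n (P P' : 'M[D]_(n,m)) (X Xi : 'M[D]_n)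
  (Y Yi : 'M[D]_m) : X *m Xi = 1%:M -> Xi *m X = 1%:M -> Y *m Yi = 1%:M ->
  Yi *m Y = 1%:M -> P = X *m P' *m Y ->
  forall N, sumCC_covers P' N -> sumCC_covers P N.
Proof.
move=> h1 h2 h3 h4 eP N hc z.
have [g [hg e]] := hc (Y *m z *m X).
pose psi (w : 'M[D]_(m,n)) := Yi *m w *m Xi.
have hm : forall x y, psi (x *m P' *m y) = psi x *m P *m psi y.
  move=> x y; rewrite /psi eP !mulmxA -(mulmxA _ Xi X) h2 mulmx1.
  by rewrite -(mulmxA _ Y Yi) h3 mulmx1.
have hc' : forall x y, psi (pcomm P' x y) = pcomm P (psi x) (psi y).
  by move=> x y; rewrite /pcomm /pmul -!hm /psi mulmxBr mulmxBl.
exists (fun i => psi (g i)); split.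
  move=> i; have [a [b [c [d ->]]]] := hg i.
  by exists (psi a), (psi b), (psi c), (psi d); rewrite /pmul hm !hc'.
rewrite /psi -mulmx_suml -mulmx_sumr -e !mulmxA h4 mul1mx -mulmxA h1 mulmx1 //.
Qed.

Lemma LS_fact (D : unitRingType) : is_division_ring D ->
  forall n m r (P : 'M[D]_(n,m)), drank_is P r ->
  exists (L : 'M[D]_(n,r)) (S : 'M[D]_(r,m)), P = L *m S.
Proof.
move=> hD n m r P [[f hf] hmax].
pose S := rowsub f P.
have hrow : forall i, exists l : 'rV[D]_r, row i P = l *m S.
  move=> i.
  pose f' := fun k : 'I_(r + 1) => match split k with inl k1 => f k1 | inr _ => i end.
  have nind : ~ rows_left_indep P f'.
    by move=> /hmax; rewrite addn1 ltnn.
  have [c [hc nc]] : exists c : 'rV[D]_(r + 1), c *m rowsub f' P = 0 /\ c <> 0.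
    apply: NNPP => H; apply: nind => c hc; apply: NNPP => nc; apply: H; by exists c.
  have eS : rowsub f' P = col_mx S (row i P).
    apply/matrixP => k j; rewrite !mxE /f'.
    by case: (split k) => [k1|k2]; rewrite !mxE.
  rewrite eS -[c]hsubmxK mul_row_col in hc.
  set c1 := lsubmx c in hc; set d := rsubmx c in hc.
  rewrite [d]mx11_scalar mul_scalar_mx in hc.
  have dnz : d 0 0 != 0.
    apply/eqP => d0; apply: nc; rewrite d0 scale0r addr0 in hc.
    have c10 := hf _ hc.
    rewrite -[c]hsubmxK -/c1 -/d c10 [d]mx11_scalar d0.
    by apply/matrixP => x y; rewrite !mxE; case: (split y) => ?; rewrite !mxE ?mul0rn.
  have du := hD _ dnz.
  exists (- (d 0 0)^-1 *: c1).
  have : (d 0 0)^-1 *: (c1 *m S + d 0 0 *: row i P) = 0 by rewrite hc scaler0.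
  rewrite scalerDr scalerA mulVr // scale1r scalemxAl => /eqP.
  by rewrite addrC addr_eq0 => /eqP ->; rewrite scaleNr mulNmx.
have [l hl] := fin_all_exists hrow.
exists (\matrix_(i, k) l i 0 k), S.
apply/row_matrixP => i; rewrite row_mul hl; congr (_ *m _).
by apply/rowP => k; rewrite !mxE.
Qed.

Lemma sum_prod (D : unitRingType) m n r : forall N (F : 'I_N -> 'M[D]_(m,n)),
  (forall i, exists (A : 'M[D]_(m,r)) (B : 'M[D]_(r,n)), F i = A *m B) ->
  exists s (C : 'M[D]_(m,s)) (R : 'M[D]_(s,n)), (s <= N * r)%N /\ \sum_(i < N) F i = C *m R.
Proof.
elim=> [|N IH] F hF.
  by exists 0%N, 0, 0; rewrite big_ord0 mul0mx.
have [s [C [R [hs e]]]] := IH (fun i => F (widen_ord (leqnSn N) i)) (fun i => hF _).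
have [A [B eAB]] := hF ord_max.
exists (s + r)%N, (row_mx C A), (col_mx R B); split.
  by rewrite mulSn [(s + r)%N]addnC leq_add2l.
by rewrite big_ord_recr /= mul_row_col -e eAB.
Qed.

Lemma ceil_le k r N : (0 < r)%N -> (k <= N * r)%N -> (ceil_div k r <= N)%N.
Proof.
move=> r0 h; rewrite /ceil_div -ltnS ltn_divLR // mulSn; lia.
Qed.

Lemma lower (D : unitRingType) : is_division_ring D ->
  forall m n r (P : 'M[D]_(n,m)), drank_is P r -> (0 < r)%N ->
  forall N, sumCC_covers P N -> (ceil_div (minn m n) r <= N)%N.
Proof.
move=> hD m n r P hr r0 N hc.
have [L [S eP]] := LS_fact hD hr.
pose k := minn m n.
have [g [hg e]] := hc (pid_mx k).
have [s [C [R [hs eCR]]]] : exists s (C : 'M[D]_(m,s)) (R : 'M[D]_(s,n)),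
    (s <= N * r)%N /\ \sum_(i < N) g i = C *m R.
  apply: sum_prod => i; have [a [b [c [d ->]]]] := hg i.
  exists (pcomm P a b *m L), (S *m pcomm P c d).
  by rewrite /pmul eP !mulmxA.
apply: ceil_le => //; apply: leq_trans hs.
apply: (IBN hD (C := (pid_mx k : 'M[D]_(k,m)) *m C) (R := R *m (pid_mx k : 'M[D]_(n,k)))).
rewrite !mulmxA -(mulmxA _ C) -eCR -e !mul_pid_mx.
have -> : minn n (minn (minn m (minn k k)) k) = k by rewrite /k; lia.
exact: pid_mx_1.
Qed.

Lemma rank_le (D : unitRingType) : is_division_ring D ->
  forall n m r t (P : 'M[D]_(n,m)) (X : 'M[D]_n) (Y : 'M[D]_m), drank_is P r ->
  P = X *m pid_mx t *m Y -> (r <= t)%N.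
Proof.
move=> hD n m r t P X Y [[f hf] _] eP.
rewrite leqNgt; apply/negP => lt.
pose G := rowsub f X *m (pid_mx t : 'M[D]_(n,t)).
have [c [nc hc]] := DEP hD G lt.
have : c *m rowsub f P = 0.
  rewrite eP rowsubE !mulmxA -(mulmxA c) -(rowsubE f X).
  have -> : (pid_mx t : 'M[D]_(n,m)) = (pid_mx t : 'M[D]_(n,t)) *m pid_mx t.
    by rewrite mul_pid_mx !minnn.
  by rewrite !mulmxA -(mulmxA c (rowsub f X)) -/G hc !mul0mx.
by move/hf => c0; rewrite c0 eqxx in nc.
Qed.

Lemma pmul_blk (D : unitRingType) t a b (A A' : 'M[D]_t) (B B' : 'M[D]_(t,b))
  (C C' : 'M[D]_(a,t)) (E E' : 'M[D]_(a,b)) :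
  block_mx A B C E *m (pid_mx t : 'M[D]_(t + b, t + a)) *m block_mx A' B' C' E'
  = block_mx (A *m A') (A *m B') (C *m A') (C *m B').
Proof.
rewrite pid_mx_block.
by rewrite !(mulmx_block, mulmx0, mul0mx, mulmx1, mul1mx, addr0, add0r).
Qed.

Lemma sub_blk (D : unitRingType) m1 m2 n1 n2 (A A' : 'M[D]_(m1,n1)) (B B' : 'M[D]_(m1,n2))
  (C C' : 'M[D]_(m2,n1)) (E E' : 'M[D]_(m2,n2)) :
  block_mx A B C E - block_mx A' B' C' E' = block_mx (A - A') (B - B') (C - C') (E - E').
Proof. by rewrite opp_block_mx add_block_mx. Qed.

Lemma inCC_blk (D : unitRingType) t a b (X Y X' Y' : 'M[D]_t) (X21 Y21 : 'M[D]_(a,t))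
  (X12 Y12 : 'M[D]_(t,b)) :
  in_CC (pid_mx t : 'M[D]_(t + b, t + a))
   (block_mx ((X *m Y - Y *m X) *m (X' *m Y' - Y' *m X'))
             ((X *m Y - Y *m X) *m (X' *m Y12 - Y' *m X12))
             ((X21 *m Y - Y21 *m X) *m (X' *m Y' - Y' *m X'))
             ((X21 *m Y - Y21 *m X) *m (X' *m Y12 - Y' *m X12))).
Proof.
exists (block_mx X 0 X21 0), (block_mx Y 0 Y21 0),
  (block_mx X' X12 0 0), (block_mx Y' Y12 0 0).
rewrite /pcomm /pmul !pmul_blk !sub_blk !mulmx0 !subrr.
by rewrite pmul_blk.
Qed.

Lemma divmod_eq p t i q : (q < t)%N ->
  (p == i * t + q)%N = (i == p %/ t)%N && (q == p %% t)%N.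
Proof.
move=> lt; apply/eqP/andP => [->|[/eqP -> /eqP ->]]; last by rewrite -divn_eq.
have t0 : (0 < t)%N by apply: leq_ltn_trans lt.
by rewrite divnMDl // modnMDl divn_small // modn_small // addn0.
Qed.

Lemma chunk_nat p p' t c : (0 < t)%N -> (p < c * t)%N ->
  (\sum_(i < c) \sum_(q < t) ((p == i * t + q) && (p' == i * t + q) : nat) = (p == p'))%N.
Proof.
move=> t0 lt.
have i0c : (p %/ t < c)%N by rewrite ltn_divLR.
rewrite (bigD1 (Ordinal i0c)) //= [X in (_ + X)%N]big1 => [|i ne]; last first.
  apply: big1 => q _; rewrite divmod_eq //.
  by move: ne; rewrite -val_eqE /= => /negPf ->.
rewrite addn0 (bigD1 (Ordinal (ltn_pmod p t0))) //= [X in (_ + X)%N]big1 => [|q ne]; last first.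
  rewrite divmod_eq //=; move: ne; rewrite -val_eqE /= => /negPf ->.
  by rewrite andbF.
by rewrite addn0 -divn_eq eqxx /= eq_sym.
Qed.

Lemma ceil_ge x t : (0 < t)%N -> (x <= ceil_div x t * t)%N.
Proof.
move=> t0; rewrite /ceil_div.
move: (divn_eq (x + t).-1 t) (ltn_pmod (x + t).-1 t0).
generalize ((x + t).-1 %/ t)%N ((x + t).-1 %% t)%N => q r; nia.
Qed.

Definition chS (D : unitRingType) a t (i : nat) : 'M[D]_(a,t) :=
  \matrix_(p < a, q < t) ((p == (i * t + q)%N :> nat)%:R).

Lemma chunk_id (D : unitRingType) a t c : (0 < t)%N -> (a <= c * t)%N ->
  \sum_(i < c) chS D a t i *m (chS D a t i)^T = 1%:M.
Proof.
move=> t0 le; apply/matrixP => p p'; rewrite summxE !mxE.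
rewrite (eq_bigr (fun i : 'I_c => (\sum_(q < t)
   ((p == (i * t + q)%N :> nat) && (p' == (i * t + q)%N :> nat))%:R : D))); last first.
  by move=> i _; rewrite !mxE; apply: eq_bigr => q _; rewrite !mxE -natrM mulnb.
rewrite (eq_bigr (fun i : 'I_c => (\sum_(q < t)
   ((p == (i * t + q)%N :> nat) && (p' == (i * t + q)%N :> nat) : nat))%:R : D)); last first.
  by move=> i _; rewrite natr_sum.
by rewrite -natr_sum chunk_nat //; apply: leq_trans le.
Qed.

Lemma chunk (D : unitRingType) a b t : (0 < t)%N -> forall W : 'M[D]_(a,b),
  exists (B : 'I_(ceil_div (minn a b) t) -> 'M[D]_(a,t)) (B' : 'I_(ceil_div (minn a b) t) -> 'M[D]_(t,b)),
  W = \sum_i B i *m B' i.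
Proof.
move=> t0 W.
have hc : (minn a b <= ceil_div (minn a b) t * t)%N by exact: ceil_ge.
move: (ceil_div (minn a b) t) hc => c hc.
case: (leqP a b) => hab.
  have h : (a <= c * t)%N by move: hc; rewrite (minn_idPl hab).
  exists (fun i => chS D a t i), (fun i => (chS D a t i)^T *m W).
  rewrite -{1}[W]mul1mx -(chunk_id D t0 h) mulmx_suml.
  by under eq_bigr do rewrite -mulmxA.
have h : (b <= c * t)%N by move: hc; rewrite (minn_idPr (ltnW hab)).
exists (fun i => W *m chS D b t i), (fun i => (chS D b t i)^T).
rewrite -{1}[W]mulmx1 -(chunk_id D t0 h) mulmx_sumr.
by under eq_bigr do rewrite mulmxA.
Qed.

Definition Tgood (D : unitRingType) t (X Y Yi T Ti : 'M[D]_t) :=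
  [/\ T = X *m Y - Y *m X, T *m Ti = 1%:M, Ti *m T = 1%:M, Y *m Yi = 1%:M
    & Yi *m Y = 1%:M].

Definition mx3 (D : unitRingType) (l : seq (seq D)) : 'M[D]_3 :=
  \matrix_(i, j) nth 0 (nth [::] l i) j.

Lemma T3 (D : unitRingType) : exists X Y Yi T Ti : 'M[D]_3, Tgood X Y Yi T Ti.
Proof.
exists (mx3 [:: [:: -1; 0; 0]; [:: 0; 0; 0]; [:: 1; 1; 0]]),
  (mx3 [:: [:: 0; 1; 0]; [:: 0; 0; 1]; [:: 1; 0; 0]]),
  (mx3 [:: [:: 0; 0; 1]; [:: 1; 0; 0]; [:: 0; 1; 0]]),
  (mx3 [:: [:: 0; -1; 0]; [:: -1; -1; 0]; [:: 1; 1; 1]]),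
  (mx3 [:: [:: 1; -1; 0]; [:: -1; 0; 0]; [:: 0; 1; 1]]).
split; apply/matrixP => i j; rewrite !mxE ?big_ord_recl ?big_ord0 !mxE ?big_ord_recl ?big_ord0 ?mxE;
  case: i => [[|[|[|?]]] ?] //; case: j => [[|[|[|?]]] ?] //=;
  rewrite ?(mulr0, mul0r, mulr1, mul1r, addr0, add0r, mulrN1, mulN1r, opprK, subr0, sub0r, opprB, addrN, addNr, subrr, oppr0) //.
Qed.

Lemma Teven (D : unitRingType) p : exists X Y Yi T Ti : 'M[D]_(p + p), Tgood X Y Yi T Ti.
Proof.
exists (block_mx 1%:M 0 0 0), (block_mx 0 1%:M (-1%:M) 0), (block_mx 0 (-1%:M) 1%:M 0),
  (block_mx 0 1%:M 1%:M 0), (block_mx 0 1%:M 1%:M 0).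
split; rewrite !(mulmx_block, mulmx0, mul0mx, mulmx1, mul1mx, addr0, add0r,
  mulmxN, mulNmx, opprK, sub_blk, subr0, sub0r, oppr0) -?scalar_mx_block //.
Qed.

Lemma Tdiag (D : unitRingType) t1 t2 (X1 Y1 Yi1 T1 Ti1 : 'M[D]_t1)
  (X2 Y2 Yi2 T2 Ti2 : 'M[D]_t2) : Tgood X1 Y1 Yi1 T1 Ti1 -> Tgood X2 Y2 Yi2 T2 Ti2 ->
  Tgood (block_mx X1 0 0 X2) (block_mx Y1 0 0 Y2) (block_mx Yi1 0 0 Yi2)
    (block_mx T1 0 0 T2) (block_mx Ti1 0 0 Ti2).
Proof.
move=> [-> a1 b1 c1 d1] [-> a2 b2 c2 d2].
split; rewrite !(mulmx_block, mulmx0, mul0mx, addr0, add0r, sub_blk, subr0, oppr0);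
  rewrite ?a1 ?a2 ?b1 ?b2 ?c1 ?c2 ?d1 ?d2 -?scalar_mx_block //.
Qed.

Lemma Tlem (D : unitRingType) t : (2 <= t)%N ->
  exists X Y Yi T Ti : 'M[D]_t, Tgood X Y Yi T Ti.
Proof.
move=> t2.
have [p [->|->]] : exists p, t = (p + p)%N \/ t = (3 + (p + p))%N.
  have := odd_double_half t; case: (odd t) => /= e.
    exists (t./2).-1; right; move: e t2; rewrite -addnn.
    generalize t./2 => h; lia.
  by exists t./2; left; rewrite -{1}e addnn.
  exact: Teven.
have [X1 [Y1 [Yi1 [T1 [Ti1 h1]]]]] := T3 D.
have [X2 [Y2 [Yi2 [T2 [Ti2 h2]]]]] := Teven D p.
by do 5 eexists; apply: (Tdiag h1 h2).
Qed.

Definition comm (D : unitRingType) n (X Y : 'M[D]_n) := X *m Y - Y *m X.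
Definition iscomm (D : unitRingType) n (K : 'M[D]_n) := exists X Y, K = comm X Y.
Definition prodcomm (D : unitRingType) n (K : 'M[D]_n) :=
  exists A B, [/\ iscomm A, iscomm B & K = A *m B].

Lemma dd0 (D : unitRingType) n (i j k l : 'I_n) : j != k ->
  delta_mx i j *m delta_mx k l = 0 :> 'M[D]_n.
Proof. exact: mul_delta_mx_0. Qed.

Lemma rowfix (D : unitRingType) n (l i0 i1 : 'I_n) (rho : 'M[D]_n) :
  i0 != l -> i1 != l -> i0 != i1 -> prodcomm (delta_mx l l *m rho).
Proof.
move=> h0l h1l h01.
have h10 : i1 != i0 by rewrite eq_sym.
pose N := delta_mx i0 l *m rho.
pose K := (delta_mx l i0 + delta_mx l i1 : 'M[D]_n).
pose K' := N - N *m delta_mx i0 i0 + delta_mx i1 i0 *m N *m delta_mx i0 i0.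
exists K, K'; split.
- exists (delta_mx l l), K; rewrite /comm /K mulmxDr mulmxDl !mul_delta_mx.
  by rewrite (dd0 _ _ _ h0l) (dd0 _ _ _ h1l) addr0 subr0.
- exists (delta_mx i0 i0), (N - N *m delta_mx i0 i0 - delta_mx i1 i0 *m N *m delta_mx i0 i0).
  rewrite /comm /K' /N !(mulmxBr, mulmxBl, mulmxDr, mulmxDl, mulmxN, mulNmx) !mulmxA !mul_delta_mx.
  rewrite !(dd0 _ _ _ h01) !mul0mx -!(mulmxA _ (delta_mx i0 i0) (delta_mx i0 i0)) !mul_delta_mx.
  by rewrite !(subr0, sub0r, subrr, opprK, opprB, addr0).
rewrite /K /K' /N !(mulmxBr, mulmxBl, mulmxDr, mulmxDl, mulmxN, mulNmx) !mulmxA !mul_delta_mx.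
rewrite !(dd0 _ _ _ h01) !(dd0 _ _ _ h10) !mul0mx.
by rewrite !(subr0, sub0r, addr0, add0r) subrK.
Qed.

Lemma pid_add (R : pzRingType) k a b u :
  pid_mx (k + u) = block_mx 1%:M 0 0 (pid_mx u) :> 'M[R]_(k + a, k + b).
Proof.
apply/matrixP => x y.
rewrite -[x](splitK) -[y](splitK).
case: (split x) => [x1|x2]; case: (split y) => [y1|y2];
  rewrite ?block_mxEul ?block_mxEur ?block_mxEdl ?block_mxEdr !mxE /=.
- by rewrite (leq_trans (ltn_ord x1) (leq_addr _ _)) andbT.
- by rewrite eqn_leq [(k + y2 <= x1)%N]leqNgt (leq_trans (ltn_ord x1) (leq_addr _ _)) andbF.
- by rewrite eqn_leq [(k + x2 <= y1)%N]leqNgt (leq_trans (ltn_ord y1) (leq_addr _ _)) /=.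
- by rewrite eqn_add2l ltn_add2l.
Qed.

Lemma prodcomm0 (D : unitRingType) n : prodcomm (0 : 'M[D]_n).
Proof.
by exists 0, 0; split; [exists 0, 0 | exists 0, 0 | ]; rewrite /comm ?mulmx0 ?subrr.
Qed.

Lemma Mgen (D : unitRingType) p q : (p <= q)%N -> forall M : 'M[D]_(p + q),
  exists K0 K1, [/\ prodcomm K0, prodcomm K1 &
    M = K0 + K1 + (1%:M - pid_mx (p + p)) *m M].
Proof.
move=> hpq M.
pose A0 := (pid_mx p : 'M[D]_(p,q)); pose B0 := (pid_mx p : 'M[D]_(q,p)).
pose J := (pid_mx p : 'M[D]_q).
have hAB : A0 *m B0 = 1%:M by rewrite mul_pid_mx minnn (minn_idPr hpq) pid_mx_1.
have hBA : B0 *m A0 = J by rewrite mul_pid_mx !minnn.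
pose E := (block_mx 1%:M 0 0 0 : 'M[D]_(p + q)).
have hO : forall A B, comm E (block_mx 0 A (- B) 0) = block_mx 0 A B 0.
  move=> A B; rewrite /comm /E !(mulmx_block, mulmx0, mul0mx, mulmx1, mul1mx, addr0, add0r).
  by rewrite sub_blk !(subr0, sub0r, opprK).
have hG : comm (block_mx 0 A0 0 0) (block_mx 0 0 B0 0) = block_mx 1%:M 0 0 (- J).
  rewrite /comm !(mulmx_block, mulmx0, mul0mx, addr0, add0r) sub_blk hAB hBA.
  by rewrite !(subr0, sub0r).
rewrite -[M]submxK.
set M11 := ulsubmx M; set M12 := ursubmx M; set M21 := dlsubmx M; set M22 := drsubmx M.
exists (comm (block_mx 0 A0 0 0) (block_mx 0 0 B0 0) *m comm E (block_mx 0 M12 (- - M21) 0)),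
  (comm E (block_mx 0 A0 (- B0) 0) *m comm E (block_mx 0 (A0 *m M22) (- (B0 *m M11)) 0)).
split.
- by exists (comm (block_mx 0 A0 0 0) (block_mx 0 0 B0 0)), (comm E (block_mx 0 M12 (- - M21) 0));
    split; [do 2 eexists | do 2 eexists |].
- by exists (comm E (block_mx 0 A0 (- B0) 0)), (comm E (block_mx 0 (A0 *m M22) (- (B0 *m M11)) 0));
    split; [do 2 eexists | do 2 eexists |].
rewrite hG !hO mulmxBl mul1mx.
have -> : (pid_mx (p + p) : 'M[D]_(p + q)) = block_mx 1%:M 0 0 J by exact: pid_add.
rewrite !(mulmx_block, mulmx0, mul0mx, mulmx1, mul1mx, addr0, add0r).
rewrite !mulmxA hAB hBA !mul1mx mulNmx mulmxN opprK add_block_mx !(addr0, add0r).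
by rewrite addrC subrK.
Qed.

Lemma Mlem (D : unitRingType) t : (2 <= t)%N -> forall M : 'M[D]_t,
  exists K0 K1 K2, [/\ prodcomm K0, prodcomm K1, prodcomm K2 & M = K0 + K1 + K2].
Proof.
move=> t2.
have [p [p1 [->|->]]] : exists p, (0 < p)%N /\ (t = p + p \/ t = p + p.+1)%N.
  have := odd_double_half t; case: (odd t) => /= e.
    exists t./2; split; last by right; move: e; rewrite -addnn; generalize t./2 => h; lia.
    by move: e t2; rewrite -addnn; generalize t./2 => h; lia.
  exists t./2; split; last by left; move: e; rewrite -addnn; generalize t./2 => h; lia.
  by move: e t2; rewrite -addnn; generalize t./2 => h; lia.
- move=> M; have [K0 [K1 [h0 h1 e]]] := Mgen (leqnn p) M.
  exists K0, K1, 0; split => //; first exact: prodcomm0.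
  by rewrite pid_mx_1 subrr mul0mx addr0 in e; rewrite addr0.
move=> M; have [K0 [K1 [h0 h1 e]]] := Mgen (leqnSn p) M.
exists K0, K1, ((1%:M - pid_mx (p + p)) *m M); split => //.
have hl : (p + p < p + p.+1)%N by rewrite addnS.
have h0' : (0 < p + p.+1)%N by rewrite addnS.
have h1' : (1 < p + p.+1)%N by rewrite addnS ltnS; lia.
have -> : (1%:M - pid_mx (p + p) : 'M[D]_(p + p.+1)) = delta_mx (Ordinal hl) (Ordinal hl).
  apply/matrixP => x y; rewrite !mxE.
  case: (eqVneq x y) => [<-|ne]; last first.
    have : (x == y :> nat) = false by apply/negbTE.
    by move=> ->; rewrite /= subrr; case: (eqVneq x (Ordinal hl)) => [ex|] //;
      case: (eqVneq y (Ordinal hl)) => [ey|]; rewrite ?andbF ?andbT //; move: ne; rewrite ex ey eqxx.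
  rewrite !eqxx /= andbb.
  have lx : (x <= p + p)%N by rewrite -ltnS -addnS.
  case: (ltnP x (p + p)) => lt.
    have -> : (x == Ordinal hl) = false by apply/negbTE; rewrite -val_eqE /= neq_ltn lt.
    by rewrite subrr.
  have -> : x = Ordinal hl by apply: val_inj; apply/eqP; rewrite eqn_leq lx lt.
  by rewrite eqxx /= subr0.
apply: (rowfix (i0 := Ordinal h0') (i1 := Ordinal h1')); rewrite -val_eqE /=; lia.
Qed.

Lemma pc_blk (D : unitRingType) t a b (K : 'M[D]_t) : prodcomm K ->
  in_CC (pid_mx t : 'M[D]_(t + b, t + a)) (block_mx K 0 0 0).
Proof.
move=> [A [B [[X [Y eA]] [X' [Y' eB]] eK]]].
rewrite eK eA eB /comm.
have := inCC_blk X Y X' Y' (0 : 'M[D]_(a,t)) 0 (0 : 'M[D]_(t,b)) 0.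
by rewrite !(mulmx0, mul0mx, subr0).
Qed.

Lemma ch_blk (D : unitRingType) t a b (B : 'M[D]_(a,t)) (B' : 'M[D]_(t,b)) :
  in_CC (pid_mx t : 'M[D]_(t + b, t + a)) (block_mx 0 0 0 (B *m B')).
Proof.
have := inCC_blk 1%:M 1%:M 1%:M 1%:M B 0 0 B'.
by rewrite !(mulmx0, mul0mx, subr0, mulmx1, mul1mx, subrr).
Qed.

Lemma sum_blk0 (D : unitRingType) m1 m2 n1 n2 N (F : 'I_N -> 'M[D]_(m2,n2)) :
  block_mx 0 0 0 (\sum_i F i) = \sum_i block_mx (0 : 'M[D]_(m1,n1)) 0 0 (F i).
Proof.
apply: (big_rec2 (fun x y => block_mx 0 0 0 x = y)).
  exact: block_mx0.
by move=> i x y _ <-; rewrite add_block_mx !addr0.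
Qed.

Lemma Hlem (D : unitRingType) t a b : (2 <= t)%N ->
  sumCC_covers (pid_mx t : 'M[D]_(t + b, t + a)) (1 + (1 + 1 + 1) + ceil_div (minn a b) t).
Proof.
move=> t2 z.
have [X [Y [Yi [T [Ti [eT hTTi hTiT hYYi hYiY]]]]]] := Tlem D t2.
rewrite -[z]submxK.
set Z11 := ulsubmx z; set Z12 := ursubmx z; set Z21 := dlsubmx z; set Z22 := drsubmx z.
pose W := Z22 - Z21 *m Ti *m Ti *m Z12.
have -> : block_mx Z11 Z12 Z21 Z22 =
   block_mx (T *m T) Z12 Z21 (Z21 *m Ti *m Ti *m Z12) +
   block_mx (Z11 - T *m T) 0 0 0 + block_mx 0 0 0 W.
  by rewrite !add_block_mx !(addr0, add0r) /W (addrC (T *m T)) subrK (addrC (_ *m Z12)) subrK.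
apply: covD; first apply: covD.
- apply: cov1.
  have := inCC_blk X Y X Y (Z21 *m Ti *m Yi) 0 (- (Yi *m Ti *m Z12)) 0.
  rewrite -eT !(mulmx0, mul0mx, subr0, sub0r, mulmxN, opprK) -!mulmxA.
  rewrite !(mulmxA Y Yi) hYYi !mul1mx !(mulmxA Yi Y) hYiY !mul1mx.
  rewrite !(mulmxA T Ti) hTTi !mul1mx hTiT mulmx1.
  by rewrite !mulmxA.
- have [K0 [K1 [K2 [h0 h1 h2 eM]]]] := Mlem t2 (Z11 - T *m T).
  have -> : block_mx (Z11 - T *m T) 0 0 0 =
      block_mx K0 0 0 0 + block_mx K1 0 0 0 + block_mx K2 0 0 0 :> 'M[D]_(t + a, t + b).
    by rewrite eM !add_block_mx !addr0.
  by apply: covD; [apply: covD|]; apply: cov1; apply: pc_blk.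
have [B [B' ->]] := chunk (ltnW t2) W.
rewrite sum_blk0; apply: cov_sum => i; exact: ch_blk.
Qed.

Lemma ceil_shift x u : (0 < u)%N -> ceil_div (u + x) u = (ceil_div x u).+1.
Proof.
move=> u0; rewrite /ceil_div.
have -> : ((u + x + u).-1 = (x + u).-1 + 1 * u)%N by lia.
by rewrite divnDMl // addn1.
Qed.

Lemma ceil_mono x r u : (0 < r)%N -> (r <= u)%N -> (ceil_div x u <= ceil_div x r)%N.
Proof.
move=> r0 ru; apply: ceil_le; first exact: leq_trans ru.
exact: leq_trans (ceil_ge x r0) (leq_mul (leqnn _) ru).
Qed.

Lemma Hgen (D : unitRingType) m n u : (2 <= u)%N -> (u <= m)%N -> (u <= n)%N ->
  sumCC_covers (pid_mx u : 'M[D]_(n,m)) (ceil_div (minn m n) u + 3).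
Proof.
move=> u2 um un.
have [a ea] : exists a, m = (u + a)%N by exists (m - u)%N; lia.
have [b eb] : exists b, n = (u + b)%N by exists (n - u)%N; lia.
subst m n => z.
suff : cov (pid_mx u : 'M[D]_(u + b, u + a)) (ceil_div (minn (u + a) (u + b)) u + 3) z by [].
apply: (cov_mono _ (Hlem u2 z)).
by rewrite -addn_minr ceil_shift ?(ltnW u2) //; lia.
Qed.

Theorem theorem2p8 (D : unitRingType) (m n r : nat) (P : 'M[D]_(n, m)) :
  is_division_ring D ->
  (2 <= m)%N -> (2 <= n)%N ->
  drank_is P r -> (2 <= r)%N ->
  (exists N, sumCC_covers P N) /\
  (forall N, sumCC_covers P N -> (ceil_div (minn m n) r <= N)%N) /\
  (exists N, (N <= ceil_div (minn m n) r + 3)%N /\ sumCC_covers P N).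
Proof.
move=> hD m2 n2 hr r2.
have r0 : (0 < r)%N by apply: leq_trans r2.
have [u [X [Xi [Y [Yi [[hu h1 h2 h3 h4] eP]]]]]] := GE hD P.
have ru := rank_le hD hr eP.
have hup : sumCC_covers P (ceil_div (minn m n) r + 3).
  apply: (cov_transfer h1 h2 h3 h4 eP) => z.
  suff : cov (pid_mx u : 'M[D]_(n, m)) (ceil_div (minn m n) r + 3) z by [].
  have u2 : (2 <= u)%N by apply: leq_trans ru.
  have um : (u <= m)%N by apply: leq_trans hu (geq_minr _ _).
  have un : (u <= n)%N by apply: leq_trans hu (geq_minl _ _).
  apply: (cov_mono _ (Hgen u2 um un z)).
  by rewrite leq_add2r; apply: ceil_mono.
split; first by exists (ceil_div (minn m n) r + 3)%N.
split; first by move=> N; apply: lower.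
by exists (ceil_div (minn m n) r + 3)%N; split.
Qed.
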